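(* Consider the following local network approximation algorithm run by every process in a synchronous system. If, at the end of some round $r$, the graph $A_p|t$ of process $p$ contains the edge $(v\to w)$, then (i) $(v\to w)\in\mathcal{G}^t$, i.e., $A_p|t\subseteq\mathcal{G}^t$; and (ii) $A_p|t$ also contains the edge $(v'\to w)$ for every $v'\in\mathcal{N}_w^t$.
   Context: A finite set $\Pi$ of $n\ge2$ processes computes in synchronous lock-step rounds $r=1,2,\dots$. An adversary fixes an arbitrary infinite sequence of simple directed graphs $\mathcal{G}^1,\mathcal{G}^2,\dots$ on vertex set $\Pi$; $(p\to q)\in\mathcal{G}^r$ iff $q$ receives $p$'s round-$r$ message in round $r$. In each round every process broadcasts one message, received exactly by its out-neighbours in $\mathcal{G}^r$, and then updates its state based on the messages received in that round. Let $\mathcal{N}_p^r=\{q:(q\to p)\in\mathcal{G}^r\}$. Algorithm: each process $p$ maintains a directed graph $A_p=(V_p,E_p)$ without loops or multi-edges whose edges carry labels that are sets of round numbers; initially $A_p=(\{p\},\emptyset)$. In round $r$, $p$ sends its current $A_p$ to all its out-neighbours, and then, for each $q\in\mathcal{N}_p^r$ with received graph $A_q$: if $E_p$ contains an edge $(q\to p)$ with label $T$, its label is replaced by $T\cup\{r\}$, otherwise the edge $(q\to p)$ with label $\{r\}$ is added; and $V_p\leftarrow V_p\cup V_q$. Afterwards, for every pair of distinct nodes $(p_i,p_j)\in V_p\times V_p$, let $T'$ be the union of the labels $S$ of all edges $(p_i\to p_j)$ in the received graphs $A_q$, $q\in\mathcal{N}_p^r$; if $T'\neq\emptyset$, the label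 $T$ of the edge $(p_i\to p_j)$ in $E_p$ is replaced by $T\cup T'$, or the edge $(p_i\to p_j)$ with label $T'$ is added if no such edge exists. For a round $t$, $A_p|t$ denotes the graph whose edges are the edges of $A_p$ whose label contains $t$. *)

(* Defs.v *)
From mathcomp Require Import all_boot.
Set Implicit Arguments. Unset Strict Implicit. Unset Printing Implicit Defensive.

(* Communication graphs: G r : rel T, where
   G r p q  means  (p -> q) is an edge of G^r  (q receives p's round-r message).
   Rounds are numbered 1, 2, ...; G 0 is irrelevant. *)

Section Algo.
Variable T : finType.

(* Local graph A_p = (V_p, E_p): E i j = Some lab  iff  the edge (i -> j) is in
   E_p, with label lab (a finite set of round numbers, given as a list; only
   membership matters). *)
Record gstate := GState { gV : {set T}; gE : T -> T -> option (seq nat) }.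

Definition init_state (p : T) : gstate := GState [set p] (fun _ _ => None).

Definition Nin (G : nat -> rel T) (r : nat) (p : T) : {set T} :=
  [set q | G r q p].

(* One round r of process p, given the states [prev] of all processes at the
   start of round r (these are the messages sent in round r). *)
Definition step (G : nat -> rel T) (r : nat) (p : T) (prev : T -> gstate)
  : gstate :=
  let Ap := prev p in
  let N := Nin G r p in
  let V1 := gV Ap :|: \bigcup_(q in N) gV (prev q) in
  let E1 := fun i j =>
    if (j == p) && (i \in N) then Some (odflt [::] (gE Ap i j) ++ [:: r])
    else gE Ap i j in
  let E2 := fun i j =>
    let T' := flatten [seq odflt [::] (gE (prev q) i j) | q <- enum N] in
    if [&& i \in V1, j \in V1, i != j & T' != [::]]
    then Some (odflt [::] (E1 i j) ++ T')
    else E1 i j in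
  GState V1 E2.

Fixpoint A (G : nat -> rel T) (r : nat) : T -> gstate :=
  match r with
  | 0 => init_state
  | r'.+1 => fun p => step G r'.+1 p (A G r')
  end.

(* (v -> w) is an edge of the restricted graph  A|t : its label contains t. *)
Definition restr_edge (a : gstate) (t : nat) (v w : T) : Prop :=
  exists lab, gE a v w = Some lab /\ t \in lab.

End Algo.

(* Main.v *)
Require Import Defs.
From mathcomp Require Import all_boot.
Set Implicit Arguments. Unset Strict Implicit. Unset Printing Implicit Defensive.

Definition lab_of (T : finType) (a : gstate T) i j := odflt [::] (gE a i j).

Lemma restrE (T : finType) (a : gstate T) t v w :
  restr_edge a t v w <-> t \in lab_of a v w.
Proof.
rewrite /lab_of /restr_edge; split; first by case=> lab [-> h].
case: (gE a v w) => [lab|] //= h; by exists lab.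
Qed.

Lemma step_memE (T : finType) (G : nat -> rel T) r p prev i j x :
  x \in lab_of (step G r p prev) i j =
  [|| x \in lab_of (prev p) i j, [&& j == p, i \in Nin G r p & x == r] |
   [&& i \in gV (step G r p prev), j \in gV (step G r p prev), i != j &
      has (fun q => x \in lab_of (prev q) i j) (enum (Nin G r p))]].
Proof.
rewrite /lab_of /step /=.
set N := Nin G r p.
set V1 := gV (prev p) :|: _.
set T' := flatten _.
have HT : (x \in T') = has (fun q => x \in odflt [::] (gE (prev q) i j)) (enum N).
  by rewrite /T' -/N; elim: (enum N) => //= q s IH; rewrite mem_cat IH.
have HE1 : x \in odflt [::] (if (j == p) && (i \in N)
      then Some (odflt [::] (gE (prev p) i j) ++ [:: r]) else gE (prev p) i j) =
   (x \in odflt [::] (gE (prev p) i j)) || [&& j == p, i \in N & x == r].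
  by case: (j == p); case: (i \in N) => //=; rewrite ?mem_cat ?inE ?orbF.
case: ifP => [/and4P [hi hj hij hT]|hc] /=.
  by rewrite mem_cat HE1 hi hj hij /= -HT orbA.
rewrite HE1 -HT; case E: (x \in T'); last by rewrite !andbF orbF.
have hne: T' != [::] by apply/eqP => h; rewrite h in E.
by rewrite hne in hc; rewrite hc orbF.
Qed.

Lemma stepV1 (T : finType) (G : nat -> rel T) r p prev x :
  x \in gV (prev p) -> x \in gV (step G r p prev).
Proof. by move=> h; rewrite /step /= inE h. Qed.

Lemma stepV2 (T : finType) (G : nat -> rel T) r p prev q x :
  q \in Nin G r p -> x \in gV (prev q) -> x \in gV (step G r p prev).
Proof.
move=> hq h; rewrite /step /= inE; apply/orP; right.
by apply/bigcupP; exists q.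
Qed.

Lemma inv (T : finType) (G : nat -> rel T)
  (hsimple : forall r, irreflexive (G r)) r : forall p,
  p \in gV (A G r p) /\
  (forall i j x, x \in lab_of (A G r p) i j ->
     [/\ i \in gV (A G r p), j \in gV (A G r p), x <= r, G x i j &
        forall v', G x v' j -> x \in lab_of (A G r p) v' j]).
Proof.
elim: r => [|r IH] p.
  by split; [rewrite /= inE|].
have -> : A G r.+1 p = step G r.+1 p (A G r) by [].
have [Hp Hl] := IH p.
split; first exact: stepV1.
move=> i j x; rewrite step_memE => /or3P [h|/and3P [/eqP hj hi /eqP hx]|/and4P [hi hj hij /hasP [q hq hx]]].
- have [hi hj hr hg hv] := Hl _ _ _ h.
  split; [exact: stepV1|exact: stepV1|exact: leqW|exact: hg|].
  by move=> v' hv'; rewrite step_memE hv.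
- subst j x.
  split; [|exact: stepV1|by []|by move: hi; rewrite inE|].
    by apply: (stepV2 hi); case: (IH i).
  by move=> v' hv'; rewrite step_memE; apply/orP; right; apply/orP; left;
     rewrite eqxx inE hv' eqxx.
- rewrite mem_enum in hq.
  have [Hq Hlq] := IH q.
  have [_ _ hr hg hv] := Hlq _ _ _ hx.
  split; [exact: hi|exact: hj|exact: leqW|exact: hg|].
  move=> v' hv'; have hx' := hv _ hv'.
  have [hvi hvj _ _ _] := Hlq _ _ _ hx'.
  rewrite step_memE; apply/orP; right; apply/orP; right.
  apply/and4P; split.
  + exact: stepV2 hq hvi.
  + exact: hj.
  + by apply/eqP => e; subst v'; move: hv'; rewrite hsimple.
  + by apply/hasP; exists q; rewrite ?mem_enum.
Qed.

Theorem lemma7 (T : finType) (G : nat -> rel T)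
  (hn : 2 <= #|T|)
  (hsimple : forall r, irreflexive (G r))
  (r : nat) (p : T) (t : nat) (v w : T) :
  restr_edge (A G r p) t v w ->
  G t v w /\ (forall v', v' \in Nin G t w -> restr_edge (A G r p) t v' w).
Proof.
move/restrE => h.
have [_ Hl] := inv hsimple r p.
have [_ _ _ hg hv] := Hl _ _ _ h.
split => // v' hv'; apply/restrE; apply: hv.
by move: hv'; rewrite inE.
Qed.
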